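(* Let $P=\mathbb{Q}[x_1,\dots,x_n]$, let $\sigma,\tau$ be two term orderings on $\mathbb{T}^n$, let $I$ be a non-zero ideal in $P$, and let $p$ be a prime which is $\sigma$-good for $I$. (a) If $p$ is $\tau$-good for $I$, then $O_\tau(I_{(p,\sigma)})=O_\tau(I)$. (b) If $p$ is $\tau$-bad for $I$, then $O_\tau(I_{(p,\sigma)})\prec_\tau O_\tau(I)$, and moreover $O_\tau(I)$ is not a proper prefix of $O_\tau(I_{(p,\sigma)})$.
   Context: $\mathbb{T}^n$ is the monoid of power-products in $x_1,\dots,x_n$. For $f\in P$, $\operatorname{den}(f)$ is the positive lcm of the denominators of its coefficients; $\operatorname{den}(G)$ is the lcm of $\operatorname{den}(g)$, $g\in G$. For a term ordering $\rho$ with $G_\rho$ the reduced $\rho$-Gröbner basis of $I$, $p$ is $\rho$-good for $I$ if $p\nmid\operatorname{den}(G_\rho)$ and $\rho$-bad otherwise. For $\sigma$-good $p$, $\pi_p$ is coefficientwise reduction modulo $p$ into $\mathbb{F}_p[x_1,\dots,x_n]$, and $I_{(p,\sigma)}$ is the ideal of $\mathbb{F}_p[x_1,\dots,x_n]$ generated by $\pi_p(G_\sigma)$. A tuple $(t_1,\dots,t_r)$ of distinct power-products is $\tau$-ordered if $t_1<_\tau\cdots<_\tau t_r$. For an ideal $J$ in a polynomial ring over a field, $O_\tau(J)$ is the $\tau$-ordered tuple of the leading terms of a minimal $\tau$-Gröbner basis of $J$ (the minimal power-product generators of $\mathrm{LT}_\tau(J)$). For $\tau$-ordered tuples $T=(t_1,\dots,t_r)$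 and $T'=(t'_1,\dots,t'_{r'})$, $T'\prec_\tau T$ means either $T$ is a proper prefix of $T'$ (i.e. $r<r'$ and $t_i=t'_i$ for $i\le r$), or there is $k\le\min(r,r')$ with $t_i=t'_i$ for $i<k$ and $t'_k<_\tau t_k$. *)

(* Defs.v *)
From HB Require Import structures.
From mathcomp Require Import all_boot all_order all_algebra.
From mathcomp Require Import mpoly.

Set Implicit Arguments.
Unset Strict Implicit.
Unset Printing Implicit Defensive.

Import GRing.Theory.
Local Open Scope ring_scope.

(* Term orderings on T^n = 'X_{1..n} (monomials; multiplication of     *)
(* power-products is addition (m1 + m2)%MM of exponent vectors, and    *)
(* 1 is the zero exponent vector 0%MM).                                *)
Definition term_ordering (n : nat) (le : rel 'X_{1..n}) : Prop :=
  [/\ reflexive le, antisymmetric le, transitive le & total le] /\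
  (forall m1 m2 m : 'X_{1..n}, le m1 m2 -> le (m1 + m)%MM (m2 + m)%MM) /\
  (forall m : 'X_{1..n}, le 0%MM m).

Definition tlt (n : nat) (le : rel 'X_{1..n}) (m1 m2 : 'X_{1..n}) : bool :=
  le m1 m2 && (m1 != m2).

Definition tdvd (n : nat) (m1 m2 : 'X_{1..n}) : bool := (m1 <= m2)%MM.

(* (Only meaningful for nonzero polynomials.)                          *)
Definition tmax (n : nat) (le : rel 'X_{1..n}) (a b : 'X_{1..n}) :=
  if le a b then b else a.

Definition LT (R : ringType) (n : nat) (le : rel 'X_{1..n})
    (f : {mpoly R[n]}) : 'X_{1..n} :=
  foldr (tmax le) 0%MM (msupp f).

Definition LC (R : ringType) (n : nat) (le : rel 'X_{1..n})
    (f : {mpoly R[n]}) : R := f@_(LT le f).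

Definition is_ideal (R : ringType) (n : nat) (I : ({mpoly R[n]} -> Prop)) : Prop :=
  [/\ I 0,
      (forall f g, I f -> I g -> I (f + g))
    & (forall f g, I g -> I (f * g))].

Definition nonzero_ideal (R : ringType) (n : nat) (I : ({mpoly R[n]} -> Prop)) :=
  exists2 f, I f & f != 0.

Definition ideal_gen (R : ringType) (n : nat) (G : seq {mpoly R[n]})
    : {mpoly R[n]} -> Prop :=
  fun f => exists h : 'I_(size G) -> {mpoly R[n]},
             f = \sum_(i < size G) h i * G`_i.

Definition reduced_GB (R : ringType) (n : nat) (le : rel 'X_{1..n})
    (I : ({mpoly R[n]} -> Prop)) (G : seq {mpoly R[n]}) : Prop :=
  [/\ uniq G,
      (forall g, g \in G -> I g),
      (* LT_le(I) is generated by the leading terms of G *)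
      (forall f, I f -> f != 0 -> exists2 g, g \in G & tdvd (LT le g) (LT le f)),
      (forall g, g \in G -> g != 0 /\ LC le g = 1)
    & (* no term of g lies in the ideal generated by LT(G \ {g}) *)
      (forall g g', g \in G -> g' \in G -> g' != g ->
         forall m, m \in msupp g -> ~~ tdvd (LT le g') m)].

Definition den_poly (n : nat) (f : {mpoly rat[n]}) : nat :=
  \big[lcmn/1%N]_(m <- msupp f) `|denq f@_m|%N.

Definition den_seq (n : nat) (G : seq {mpoly rat[n]}) : nat :=
  \big[lcmn/1%N]_(g <- G) den_poly g.

Definition red_rat (p : nat) (q : rat) : 'F_p :=
  (numq q)%:~R / (denq q)%:~R.

Arguments red_rat p q : clear implicits.

Definition pi_p (p n : nat) (f : {mpoly rat[n]}) : {mpoly 'F_p[n]} :=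
  map_mpoly (red_rat p) f.

Arguments pi_p p {n} f.

Definition I_p (p n : nat) (Gsigma : seq {mpoly rat[n]}) : {mpoly 'F_p[n]} -> Prop :=
  ideal_gen (map (pi_p p) Gsigma).
Arguments I_p p {n} Gsigma _.

Definition LT_of (R : ringType) (n : nat) (le : rel 'X_{1..n})
    (J : ({mpoly R[n]} -> Prop)) (m : 'X_{1..n}) : Prop :=
  exists f, [/\ J f, f != 0 & LT le f = m].

Definition min_gen (R : ringType) (n : nat) (le : rel 'X_{1..n})
    (J : ({mpoly R[n]} -> Prop)) (m : 'X_{1..n}) : Prop :=
  LT_of le J m /\ (forall m', LT_of le J m' -> tdvd m' m -> m' = m).

Definition is_O (R : ringType) (n : nat) (le : rel 'X_{1..n})
    (J : ({mpoly R[n]} -> Prop)) (s : seq 'X_{1..n}) : Prop :=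
  sorted (tlt le) s /\ (forall m, m \in s <-> min_gen le J m).

Definition proper_prefix (n : nat) (T T' : seq 'X_{1..n}) : Prop :=
  (size T < size T')%N /\ T = take (size T) T'.

(* T' <_tau T  (0-indexed positions k) *)
Definition prec_tau (n : nat) (le : rel 'X_{1..n}) (T' T : seq 'X_{1..n}) : Prop :=
  proper_prefix T T' \/
  exists k : nat, [/\ (k < minn (size T) (size T'))%N,
                      take k T = take k T'
                    & tlt le (nth 0%MM T' k) (nth 0%MM T k)].

(* Main.v *)
Require Import Defs.
From HB Require Import structures.
From mathcomp Require Import all_boot all_order all_algebra.
From mathcomp Require Import mpoly.
From mathcomp Require Import ring.
From Stdlib Require Import Classical ClassicalEpsilon.
Set Implicit Arguments.
Unset Strict Implicit.
Unset Printing Implicit Defensive.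
Import GRing.Theory Num.Theory.

Local Open Scope ring_scope.

Section Arith.
Variable p : nat.
Hypothesis pr : prime p.

Definition Zp (q : rat) : bool := ~~ (p %| `|denq q|)%N.

Lemma Fp_int0 (z : int) : (z%:~R == 0 :> 'F_p) = (p %| `|z|)%N.
Proof. by rewrite -(dvdz_pcharf (pchar_Fp pr)). Qed.

Lemma num_den_eq (q : rat) (x y : int) :
  q * y%:~R = x%:~R -> numq q * y = x * denq q.
Proof.
move=> H; apply: (@intr_inj rat); rewrite !rmorphM /=.
rewrite -H.
have dn : (denq q)%:~R != 0 :> rat by rewrite intr_eq0 denq_neq0.
have qE := divq_num_den q.
move: dn qE; set N := numq q; set D := denq q => dn qE.
by rewrite -qE; field.
Qed.

Lemma den_dvd (q : rat) (x y : int) :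
  q * y%:~R = x%:~R -> (denq q %| y)%Z.
Proof.
move=> /num_den_eq E.
have : (denq q %| numq q * y)%Z by rewrite E dvdz_mull.
rewrite Gauss_dvdzr //.
rewrite /coprimez gcdzC /gcdz; have := coprime_num_den q; rewrite /coprime => /eqP ->; done.
Qed.

Lemma Zp_frac (q : rat) (x y : int) :
  ~~ (p %| `|y|)%N -> q * y%:~R = x%:~R -> Zp q.
Proof.
move=> py /den_dvd H; apply/negP => pd; move/negP: py; apply.
exact: dvdn_trans pd H.
Qed.

Lemma red_frac (q : rat) (x y : int) :
  ~~ (p %| `|y|)%N -> q * y%:~R = x%:~R ->
  red_rat p q = x%:~R / y%:~R.
Proof.
move=> py H.
have zq := Zp_frac py H.
have E := num_den_eq H.
have /(congr1 (fun z : int => z%:~R : 'F_p)) := E.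
rewrite !rmorphM /= => E'.
have y0 : y%:~R != 0 :> 'F_p by rewrite Fp_int0.
have d0 : (denq q)%:~R != 0 :> 'F_p by rewrite Fp_int0.
rewrite /red_rat; apply/eqP; rewrite eqr_div // E' //.
Qed.

Lemma rat_den (a : rat) : a * (denq a)%:~R = (numq a)%:~R.
Proof.
have dn : (denq a)%:~R != 0 :> rat by rewrite intr_eq0 denq_neq0.
have qE := divq_num_den a.
move: dn qE; set N := numq a; set D := denq a => dn qE.
by rewrite -qE; field.
Qed.

Lemma Zp_notdvd2 (y z : int) : ~~ (p %| `|y|)%N -> ~~ (p %| `|z|)%N ->
  ~~ (p %| `|(y * z)%R|)%N.
Proof. by move=> a b; rewrite abszM Euclid_dvdM // negb_or a b. Qed.

Lemma ZpD (a b : rat) : Zp a -> Zp b ->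
  Zp (a + b) /\ red_rat p (a + b) = red_rat p a + red_rat p b.
Proof.
move=> za zb.
have py := Zp_notdvd2 za zb.
have H : (a + b) * (denq a * denq b)%:~R = (numq a * denq b + numq b * denq a)%:~R.
  rewrite !rmorphD !rmorphM /= -(rat_den a) -(rat_den b); ring.
split; first exact: Zp_frac py H.
rewrite (red_frac py H) /red_rat.
have d1 : (denq a)%:~R != 0 :> 'F_p by rewrite Fp_int0.
have d2 : (denq b)%:~R != 0 :> 'F_p by rewrite Fp_int0.
rewrite !rmorphD !rmorphM /=; field; rewrite d1 d2 //.
Qed.

Lemma ZpM (a b : rat) : Zp a -> Zp b ->
  Zp (a * b) /\ red_rat p (a * b) = red_rat p a * red_rat p b.
Proof.
move=> za zb.
have py := Zp_notdvd2 za zb.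
have H : (a * b) * (denq a * denq b)%:~R = (numq a * numq b)%:~R.
  rewrite !rmorphM /= -(rat_den a) -(rat_den b); ring.
split; first exact: Zp_frac py H.
rewrite (red_frac py H) /red_rat.
have d1 : (denq a)%:~R != 0 :> 'F_p by rewrite Fp_int0.
have d2 : (denq b)%:~R != 0 :> 'F_p by rewrite Fp_int0.
rewrite !rmorphM /=; field; rewrite d1 d2 //.
Qed.

Lemma Zp_int (z : int) : Zp z%:~R /\ red_rat p z%:~R = z%:~R.
Proof.
have py : ~~ (p %| `|1%R : int|)%N by rewrite absz1 dvdn1; case: (p) pr => [|[|]].
have H : z%:~R * (1%R : int)%:~R = z%:~R :> rat by rewrite mulr1.
split; first exact: Zp_frac py H.
by rewrite (red_frac py H) rmorph1 divr1.
Qed.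

Lemma ZpN (a : rat) : Zp a -> Zp (- a) /\ red_rat p (- a) = - red_rat p a.
Proof.
move=> za; have [z1 r1] := Zp_int (-1).
have [h1 h2] := ZpM z1 za.
by rewrite -mulN1r; split => //; rewrite h2 r1 rmorphN rmorph1 mulN1r.
Qed.

End Arith.

Local Open Scope ring_scope.

Section Poly.
Variable p : nat.
Hypothesis pr : prime p.
Variable n : nat.

Lemma red0 : red_rat p 0 = 0.
Proof. by rewrite /red_rat /= mul0r. Qed.

Lemma Zp0 : Zp p 0.
Proof. by rewrite /Zp /= dvdn1; case: (p) pr => [|[|]]. Qed.

Lemma red_sum (I : Type) (r : seq I) (P : pred I) (F : I -> rat) :
  (forall i, P i -> Zp p (F i)) ->
  Zp p (\sum_(i <- r | P i) F i) /\
  red_rat p (\sum_(i <- r | P i) F i) = \sum_(i <- r | P i) red_rat p (F i).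
Proof.
move=> H; apply: (big_ind2 (fun x y => Zp p x /\ red_rat p x = y)).
- by split; [exact: Zp0 | exact: red0].
- move=> x1 x2 y1 y2 [z1 <-] [z2 <-]; exact: ZpD.
- move=> i Pi; split; [exact: H|by []].
Qed.

Definition ZP (f : {mpoly rat[n]}) := forall m, Zp p f@_m.

Lemma mcoeff_pi (f : {mpoly rat[n]}) m : (pi_p p f)@_m = red_rat p f@_m.
Proof.
rewrite /pi_p /map_mpoly /mmap raddf_sum /=.
under eq_bigr do rewrite mmap1_id mcoeffCM mcoeffX.
case: (boolP (m \in msupp f)) => mf.
  rewrite (big_rem m) //= eqxx mulr1 big1_seq ?addr0 // => k /andP[_ km].
  have : k != m.
    apply/negP => /eqP ekm; move: km; rewrite ekm.
    by rewrite mem_rem_uniq ?msupp_uniq // inE eqxx.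
  by move/negbTE ->; rewrite mulr0.
rewrite big1_seq; last first.
  move=> k /andP[_ km]; have : k != m by apply/negP => /eqP ekm; move: mf; rewrite -ekm km.
  by move/negbTE ->; rewrite mulr0.
by rewrite memN_msupp_eq0 // red0.
Qed.

Lemma Zp1 : Zp p 1 /\ red_rat p 1 = 1.
Proof. by have := Zp_int pr 1; rewrite !rmorph1. Qed.

Lemma ZPD (f g : {mpoly rat[n]}) : ZP f -> ZP g ->
  ZP (f + g) /\ pi_p p (f + g) = pi_p p f + pi_p p g.
Proof.
move=> zf zg; split.
  by move=> m; rewrite mcoeffD; exact: (ZpD pr (zf m) (zg m)).1.
apply/mpolyP => m.
rewrite [RHS]mcoeffD.
rewrite [LHS]mcoeff_pi [X in _ = X + _]mcoeff_pi [X in _ = _ + X]mcoeff_pi.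
rewrite [in LHS]mcoeffD.
exact: (ZpD pr (zf m) (zg m)).2.
Qed.

Lemma ZPN (f : {mpoly rat[n]}) : ZP f -> ZP (- f) /\ pi_p p (- f) = - pi_p p f.
Proof.
move=> zf; split.
  by move=> m; rewrite mcoeffN; exact: (ZpN pr (zf m)).1.
apply/mpolyP => m.
rewrite [RHS]mcoeffN [LHS]mcoeff_pi [X in _ = - X]mcoeff_pi [in LHS]mcoeffN.
exact: (ZpN pr (zf m)).2.
Qed.

Lemma ZPB (f g : {mpoly rat[n]}) : ZP f -> ZP g ->
  ZP (f - g) /\ pi_p p (f - g) = pi_p p f - pi_p p g.
Proof.
move=> zf zg; have [zn pn] := ZPN zg; have [z e] := ZPD zf zn.
by split => //; rewrite e pn.
Qed.

Lemma ZPM (f g : {mpoly rat[n]}) : ZP f -> ZP g ->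
  ZP (f * g) /\ pi_p p (f * g) = pi_p p f * pi_p p g.
Proof.
move=> zf zg.
have H m : Zp p (f * g)@_m /\ red_rat p (f * g)@_m = (pi_p p f * pi_p p g)@_m.
  rewrite [(f * g)@_m]mcoeffM [(pi_p p f * pi_p p g)@_m]mcoeffM.
  have [z1 e1] := @red_sum _ (index_enum _)
     (fun k : 'X_{1..n < (mdeg m).+1, (mdeg m).+1} => m == (k.1 + k.2)%MM)
     (fun k => f@_k.1 * g@_k.2) (fun k _ => (ZpM pr (zf k.1) (zg k.2)).1).
  split; first exact: z1.
  rewrite e1; apply: eq_bigr => k _.
  rewrite [X in _ = X * _]mcoeff_pi [X in _ = _ * X]mcoeff_pi.
  exact: (ZpM pr (zf _) (zg _)).2.
split; first by move=> m; exact: (H m).1.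
by apply/mpolyP => m; rewrite [LHS]mcoeff_pi; exact: (H m).2.
Qed.

Lemma ZPC (c : rat) : Zp p c -> ZP c%:MP_[n] /\ pi_p p c%:MP_[n] = (red_rat p c)%:MP_[n].
Proof.
move=> zc; split.
  move=> m; rewrite mcoeffC; case: (m == 0%MM); rewrite ?mulr1 ?mulr0 //; exact: Zp0.
apply/mpolyP => m; rewrite [LHS]mcoeff_pi [RHS]mcoeffC [in LHS]mcoeffC.
by case: (m == 0%MM); rewrite ?mulr1 ?mulr0 // red0.
Qed.

Lemma ZPX (m : 'X_{1..n}) : ZP 'X_[m] /\ pi_p p 'X_[m] = 'X_[m].
Proof.
split.
  move=> k; rewrite mcoeffX; case: (m == k); [exact: Zp1.1|exact: Zp0].
apply/mpolyP => k; rewrite [LHS]mcoeff_pi [RHS]mcoeffX [in LHS]mcoeffX.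
by case: (m == k); [exact: Zp1.2|exact: red0].
Qed.

Lemma ZP_sum (I : Type) (r : seq I) (P : pred I) (F : I -> {mpoly rat[n]}) :
  (forall i, P i -> ZP (F i)) ->
  ZP (\sum_(i <- r | P i) F i) /\
  pi_p p (\sum_(i <- r | P i) F i) = \sum_(i <- r | P i) pi_p p (F i).
Proof.
move=> H; apply: (big_ind2 (fun x y => ZP x /\ pi_p p x = y)).
- split; first by move=> m; rewrite mcoeff0; exact: Zp0.
  by apply/mpolyP => m; rewrite [LHS]mcoeff_pi !mcoeff0 red0.
- move=> x1 x2 y1 y2 [z1 <-] [z2 <-]; exact: ZPD.
- move=> i Pi; split; [exact: H|by []].
Qed.

End Poly.

Local Open Scope ring_scope.

Section TO.
Variable n : nat.
Variable le : rel 'X_{1..n}.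
Hypothesis hle : term_ordering le.
Implicit Types m a k x : 'X_{1..n}.

Lemma le_refl m : le m m.
Proof. by case: hle => [[r _ _ _] _]. Qed.
Lemma le_trans m1 m2 m3 : le m1 m2 -> le m2 m3 -> le m1 m3.
Proof. by case: hle => [[_ _ t _] _] h1 h2; exact: t h1 h2. Qed.
Lemma le_anti m1 m2 : le m1 m2 -> le m2 m1 -> m1 = m2.
Proof. by case: hle => [[_ a _ _] _] h1 h2; apply: a; rewrite h1 h2. Qed.
Lemma le_total m1 m2 : le m1 m2 || le m2 m1.
Proof. by case: hle => [[_ _ _ t] _]; exact: t. Qed.
Lemma le_addr m1 m2 m : le m1 m2 -> le (m1 + m)%MM (m2 + m)%MM.
Proof. by case: hle => [_ [c _]]; exact: c. Qed.
Lemma le_addl m1 m2 m : le m1 m2 -> le (m + m1)%MM (m + m2)%MM.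
Proof. by move=> h; rewrite ![(m + _)%MM]addmC; exact: le_addr. Qed.
Lemma le0 m : le 0%MM m.
Proof. by case: hle => [_ [_ z]]; exact: z. Qed.

Lemma tdvd_le m1 m2 : tdvd m1 m2 -> le m1 m2.
Proof.
rewrite /tdvd => h; rewrite -(submK h).
by rewrite -{1}[m1]add0m; apply: le_addr; exact: le0.
Qed.

Lemma tlt_le m1 m2 : tlt le m1 m2 -> le m1 m2.
Proof. by case/andP. Qed.
Lemma tlt_neq m1 m2 : tlt le m1 m2 -> m1 != m2.
Proof. by case/andP. Qed.
Lemma tlt_irr m : ~~ tlt le m m.
Proof. by rewrite /tlt eqxx andbF. Qed.
Lemma tltNle m1 m2 : tlt le m1 m2 -> ~~ le m2 m1.
Proof.
case/andP => h1 h2; apply/negP => h3; move/negP: h2; apply.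
by apply/eqP; exact: le_anti.
Qed.
Lemma le_tlt_trans m1 m2 m3 : le m1 m2 -> tlt le m2 m3 -> tlt le m1 m3.
Proof.
move=> h1 h2; apply/andP; split; first exact: le_trans h1 (tlt_le h2).
apply/negP => /eqP e; move: h2; rewrite -e => /tltNle; rewrite h1.
done.
Qed.
Lemma tlt_le_trans m1 m2 m3 : tlt le m1 m2 -> le m2 m3 -> tlt le m1 m3.
Proof.
move=> h1 h2; apply/andP; split; first exact: le_trans (tlt_le h1) h2.
apply/negP => /eqP e; move: h1; rewrite e => /tltNle; rewrite h2.
done.
Qed.
Lemma tlt_trans m1 m2 m3 : tlt le m1 m2 -> tlt le m2 m3 -> tlt le m1 m3.
Proof. move=> h1 h2; exact: le_tlt_trans (tlt_le h1) h2. Qed.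
Lemma Nle_tlt m1 m2 : ~~ le m1 m2 -> tlt le m2 m1.
Proof.
move=> h; have := le_total m1 m2; rewrite (negbTE h) /= => h2.
apply/andP; split => //; apply/negP => /eqP e; move: h; rewrite e le_refl.
done.
Qed.
Lemma tlt_total m1 m2 : m1 != m2 -> tlt le m1 m2 || tlt le m2 m1.
Proof.
move=> ne; case: (boolP (le m1 m2)) => h.
  by rewrite /tlt h ne.
by rewrite (Nle_tlt h) orbT.
Qed.

Lemma tdvd_refl m : tdvd m m.
Proof. exact: lepm_refl. Qed.
Lemma tdvd_trans m1 m2 m3 : tdvd m1 m2 -> tdvd m2 m3 -> tdvd m1 m3.
Proof. move=> h1 h2; exact: lepm_trans h1 h2. Qed.
Lemma tdvd_anti m1 m2 : tdvd m1 m2 -> tdvd m2 m1 -> m1 = m2.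
Proof.
move=> h1 h2; apply: le_anti; exact: tdvd_le.
Qed.
Lemma tdvd_add m1 m : tdvd m1 (m + m1)%MM.
Proof. exact: lem_addl. Qed.

Lemma foldr_tmax_ge (s : seq 'X_{1..n}) x :
  x \in s -> le x (foldr (tmax le) 0%MM s).
Proof.
elim: s => [|y s IH] //=; rewrite inE => /orP[/eqP ->|xs].
  rewrite /tmax; case: ifP => // _; exact: le_refl.
rewrite /tmax; case: ifP => h; first exact: IH.
apply: le_trans (IH xs) _.
by have := le_total y (foldr (tmax le) 0%MM s); rewrite h.
Qed.

Lemma foldr_tmax_mem (s : seq 'X_{1..n}) :
  s != [::] -> foldr (tmax le) 0%MM s \in s.
Proof.
elim: s => [|y s IH] // _.
change (foldr (tmax le) 0%MM (y :: s)) with (tmax le y (foldr (tmax le) 0%MM s)).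
rewrite /tmax; case: s IH => [|z s] IH.
  case: ifP => h; last by rewrite inE eqxx.
  rewrite /= inE; apply/eqP; symmetry; apply: (le_anti h); exact: le0.
case: ifP => h; last by rewrite inE eqxx.
by rewrite inE (IH erefl) orbT.
Qed.

Variable R : nzRingType.
Implicit Types f g : {mpoly R[n]}.

Lemma LT_mem f : f != 0 -> LT le f \in msupp f.
Proof.
move=> nz; apply: foldr_tmax_mem; by rewrite msupp_eq0.
Qed.

Lemma LT_ge f m : m \in msupp f -> le m (LT le f).
Proof. exact: foldr_tmax_ge. Qed.

Lemma LT_eq f m : m \in msupp f -> (forall m', m' \in msupp f -> le m' m) ->
  LT le f = m.
Proof.
move=> mf h; apply: le_anti; last exact: LT_ge.
apply: h; apply: LT_mem; apply/negP => /eqP f0; move: mf; rewrite f0 msupp0.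
done.
Qed.

Lemma LC_neq0 f : f != 0 -> LC le f != 0.
Proof. by move=> nz; rewrite /LC -mcoeff_msupp; exact: LT_mem. Qed.

Lemma monoM_coef (c : R) a g k : ((c *: 'X_[a]) * g)@_(a + k)%MM = c * g@_k.
Proof.
by rewrite -scalerAl mcoeffZ -(commr_mpolyX a g) mcoeffMX.
Qed.

Lemma monoM_supp (c : R) a g m : m \in msupp ((c *: 'X_[a]) * g) ->
  exists2 k, k \in msupp g & m = (a + k)%MM.
Proof.
rewrite -scalerAl => /msuppZ_le; rewrite -(commr_mpolyX a g).
rewrite (perm_mem (msuppMX g a)) => /mapP[k kg ->].
by exists k.
Qed.

Lemma LT_of_up (J : {mpoly R[n]} -> Prop) m a :
  is_ideal J -> LT_of le J m -> LT_of le J (a + m)%MM.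
Proof.
case=> _ _ Jm [f [Jf nz <-]].
have cE := monoM_coef 1 a f (LT le f).
have mem : (a + LT le f)%MM \in msupp ((1 *: 'X_[a]) * f).
  by rewrite mcoeff_msupp cE mul1r -mcoeff_msupp; exact: LT_mem.
exists ((1 *: 'X_[a]) * f); split.
- exact: Jm.
- by apply/negP => /eqP e; move: mem; rewrite e msupp0.
- apply: LT_eq => // m' /monoM_supp [k kf ->].
  apply: le_addl; exact: LT_ge.
Qed.

Lemma red_step f g : f != 0 -> g != 0 -> LC le g = 1 ->
  tdvd (LT le g) (LT le f) ->
  let f2 := f - (LC le f *: 'X_[LT le f - LT le g]) * g in
  f2 = 0 \/ tlt le (LT le f2) (LT le f).
Proof.
move=> fnz gnz lcg dv f2.
have aE : (LT le f - LT le g + LT le g)%MM = LT le f by rewrite submK.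
have sup : forall m, m \in msupp f2 -> le m (LT le f).
  move=> m /msuppB_le; rewrite mem_cat => /orP[/LT_ge //|/monoM_supp [k kg ->]].
  rewrite -[X in le _ X]aE; apply: le_addl; exact: LT_ge.
have c0 : f2@_(LT le f) = 0.
  rewrite /f2 mcoeffB -[X in _ - (_ * _)@_X]aE monoM_coef.
  by move: lcg; rewrite /LC => ->; rewrite mulr1 subrr.
case: (eqVneq f2 0) => [->|nz]; [by left|right].
have mem := LT_mem nz.
apply/andP; split; first exact: sup.
apply/negP => /eqP e; move: mem; rewrite e mcoeff_msupp c0 eqxx.
done.
Qed.

End TO.

Lemma exmin (P : nat -> Prop) : (exists x, P x) ->
  exists x, P x /\ forall y, P y -> (x <= y)%N.
Proof.
move=> [x Px]; elim/ltn_ind: x Px => x IH Px.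
case: (classic (exists y, P y /\ (y < x)%N)) => [[y [Py lt]]|H].
  exact: IH lt Py.
exists x; split => // y Py; rewrite leqNgt; apply/negP => lt; apply: H.
by exists y.
Qed.

Lemma nat_subseq (a : nat -> nat) : exists phi : nat -> nat,
  (forall i, phi i < phi i.+1)%N /\ (forall i, a (phi i) <= a (phi i.+1))%N.
Proof.
have H N : {k | (N <= k)%N /\ forall k', (N <= k')%N -> (a k <= a k')%N}.
  apply: constructive_indefinite_description.
  have [v [[k [Nk ak]] vmin]] := exmin (P := fun v => exists k, (N <= k)%N /\ a k = v)
     (ex_intro _ (a N) (ex_intro _ N (conj (leqnn N) erefl))).
  exists k; split => // k' Nk'; rewrite ak; apply: vmin; by exists k'.
pose phi := fix phi i := match i with
  | 0 => sval (H 0%N) | i'.+1 => sval (H (phi i').+1) end.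
pose lb i := match i with 0 => 0%N | i'.+1 => (phi i').+1 end.
have phiE i : phi i = sval (H (lb i)) by case: i.
have lbP i : (lb i <= phi i)%N by rewrite phiE; case: (H (lb i)) => k [].
have minP i k : (lb i <= k)%N -> (a (phi i) <= a k)%N.
  by rewrite phiE; case: (H (lb i)) => k0 [_ h] /=; exact: h.
have inc i : (phi i < phi i.+1)%N by have := lbP i.+1.
exists phi; split => // i; apply: minP.
by apply: leq_trans (lbP i) (ltnW (inc i)).
Qed.

Lemma incr_mono (phi : nat -> nat) : (forall i, phi i < phi i.+1)%N ->
  forall i j, (i < j)%N -> (phi i < phi j)%N.
Proof.
move=> h i j; elim: j => // j IH; rewrite ltnS leq_eqVlt => /orP[/eqP ->|lt].
  exact: h.
exact: ltn_trans (IH lt) (h j).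
Qed.

Lemma step_mono (b : nat -> nat) : (forall i, b i <= b i.+1)%N ->
  forall i j, (i <= j)%N -> (b i <= b j)%N.
Proof.
move=> h i j; elim: j => [|j IH]; first by rewrite leqn0 => /eqP ->.
rewrite leq_eqVlt => /orP[/eqP ->//|lt].
exact: leq_trans (IH lt) (h j).
Qed.

Section Dickson.
Variable n : nat.

Lemma dickson_coords (f : nat -> 'X_{1..n}) (L : seq 'I_n) :
  exists phi : nat -> nat, (forall i, phi i < phi i.+1)%N /\
    forall j, j \in L -> forall i, (f (phi i) j <= f (phi i.+1) j)%N.
Proof.
elim: L => [|j L [phi [inc mon]]].
  by exists id; split.
have [psi [inc2 mon2]] := nat_subseq (fun i => f (phi i) j).
exists (fun i => phi (psi i)); split.
  by move=> i; apply: incr_mono.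
move=> j'; rewrite inE => /orP[/eqP ->|jL] i; first exact: mon2.
apply: (step_mono (b := fun k => f (phi k) j')); last exact: ltnW.
by move=> k; exact: mon.
Qed.

Lemma dickson (f : nat -> 'X_{1..n}) :
  exists i j, (i < j)%N /\ tdvd (f i) (f j).
Proof.
have [phi [inc mon]] := dickson_coords f (enum 'I_n).
exists (phi 0%N), (phi 1%N); split; first exact: inc.
apply/mnm_lepP => j; apply: mon; by rewrite mem_enum.
Qed.

Variable le : rel 'X_{1..n}.
Hypothesis hle : term_ordering le.

Lemma tlt_wf : well_founded (fun a b => tlt le a b).
Proof.
move=> x; apply: NNPP => nacc.
pose T := {y | ~ Acc (fun a b => tlt le a b) y}.
have step (y : T) : {z : T | tlt le (sval z) (sval y)}.
  apply: constructive_indefinite_description.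
  case: y => y ny /=.
  have : ~ forall z, tlt le z y -> Acc (fun a b => tlt le a b) z.
    by move=> H; apply: ny; constructor.
  move/not_all_ex_not => [z hz].
  have [h1 h2] := imply_to_and _ _ hz.
  by exists (exist _ z h2).
pose c := fix c i := match i with
  | 0 => (exist _ x nacc : T) | i'.+1 => sval (step (c i')) end.
pose f i := sval (c i).
have dec i : tlt le (f i.+1) (f i) by rewrite /f /=; case: (step (c i)).
have decm i j : (i < j)%N -> tlt le (f j) (f i).
  elim: j => // j IH; rewrite ltnS leq_eqVlt => /orP[/eqP ->|lt].
    exact: dec.
  have h1 := dec j; have h2 := IH lt; exact: (tlt_trans hle h1 h2).
have [i [j [lt dv]]] := dickson f.
have := tltNle hle (decm _ _ lt); rewrite (tdvd_le hle dv).
done.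
Qed.

Lemma tlt_ind (P : 'X_{1..n} -> Prop) :
  (forall x, (forall y, tlt le y x -> P y) -> P x) -> forall x, P x.
Proof. move=> H x; exact: (well_founded_ind tlt_wf P H x). Qed.

End Dickson.

Local Open Scope ring_scope.

Section IdealGen.
Variables (R : nzRingType) (n : nat) (G : seq {mpoly R[n]}).

Lemma ideal_gen_ideal : is_ideal (ideal_gen G).
Proof.
split.
- by exists (fun _ => 0); rewrite big1 // => i _; rewrite mul0r.
- move=> f g [h1 ->] [h2 ->]; exists (fun i => h1 i + h2 i).
  by rewrite -big_split; apply: eq_bigr => i _; rewrite mulrDl.
- move=> f g [h ->]; exists (fun i => f * h i).
  by rewrite mulr_sumr; apply: eq_bigr => i _; rewrite mulrA.
Qed.

Lemma ideal_gen_mem (g : {mpoly R[n]}) (h : {mpoly R[n]}) :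
  g \in G -> ideal_gen G (h * g).
Proof.
move=> gG; have lt : (index g G < size G)%N by rewrite index_mem.
pose j := Ordinal lt.
exists (fun i => if i == j then h else 0).
rewrite (bigD1 j) //= eqxx big1 ?addr0 ?nth_index //.
by move=> i /negbTE ->; rewrite mul0r.
Qed.
End IdealGen.

Section Lcm.
Variable p : nat.
Hypothesis pr : prime p.

Lemma big_lcm_dvd (T : eqType) (r : seq T) (F : T -> nat) x :
  x \in r -> (F x %| \big[lcmn/1%N]_(y <- r) F y)%N.
Proof.
move=> xr; rewrite (big_rem x) //=; exact: dvdn_lcml.
Qed.

Lemma big_lcm_prime (T : eqType) (r : seq T) (F : T -> nat) :
  (p %| \big[lcmn/1%N]_(y <- r) F y)%N -> exists2 x, x \in r & (p %| F x)%N.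
Proof.
elim: r => [|x r IH]; first by rewrite big_nil dvdn1 => /eqP p1; move: pr; rewrite p1.
rewrite big_cons => h.
have : (p %| F x * \big[lcmn/1%N]_(y <- r) F y)%N.
  apply: dvdn_trans h _; by rewrite dvdn_lcm dvdn_mulr ?dvdn_mull.
rewrite Euclid_dvdM // => /orP[h1|/IH [y yr hy]].
  by exists x; rewrite ?inE ?eqxx.
by exists y; rewrite ?inE ?yr ?orbT.
Qed.
End Lcm.

Section Main1.
Variables (n p : nat).
Hypothesis pr : prime p.

Lemma good_ZP (G : seq {mpoly rat[n]}) g :
  ~~ (p %| den_seq G)%N -> g \in G -> ZP p g.
Proof.
move=> hg gG m.
case: (boolP (m \in msupp g)) => mg; last first.
  rewrite (memN_msupp_eq0 mg); exact: Zp0 pr.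
apply/negP => pd; move/negP: hg; apply.
apply: dvdn_trans pd _.
apply: dvdn_trans (big_lcm_dvd (fun m => `|denq g@_m|%N) mg) _.
exact: (big_lcm_dvd (@den_poly n) gG).
Qed.

Lemma bad_exists (G : seq {mpoly rat[n]}) :
  (p %| den_seq G)%N -> exists2 g, g \in G & ~ ZP p g.
Proof.
move=> /(big_lcm_prime pr) [g gG] /(big_lcm_prime pr) [m mg pm].
exists g => // H; move: (H m); rewrite /Zp pm.
done.
Qed.

Lemma pi0 : pi_p p (0 : {mpoly rat[n]}) = 0.
Proof. by apply/mpolyP => m; rewrite [LHS]mcoeff_pi !mcoeff0 red0. Qed.

Lemma ZPmono (c : rat) (a : 'X_{1..n}) : Zp p c ->
  ZP p (c *: 'X_[a]) /\ pi_p p (c *: 'X_[a]) = red_rat p c *: 'X_[a].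
Proof.
move=> zc.
have [z1 e1] := ZPM pr (ZPC pr n zc).1 (ZPX pr a).1.
rewrite -!mul_mpolyC; split => //; rewrite e1.
by rewrite (ZPC pr n zc).2 (ZPX pr a).2.
Qed.

Lemma ZPpow (k : nat) : Zp p (p%:R ^+ k) /\ red_rat p (p%:R ^+ k) = (p ^ k)%:R.
Proof.
have := Zp_int pr (p ^ k)%N. rewrite -!pmulrn => -[a b].
by rewrite -natrX.
Qed.

Definition liftp (q : {mpoly 'F_p[n]}) : {mpoly rat[n]} :=
  \sum_(m <- msupp q) ((val q@_m)%:R : rat) *: 'X_[m].

Lemma liftpP q : ZP p (liftp q) /\ pi_p p (liftp q) = q.
Proof.
have H : forall m,
    ZP p (((val q@_m)%:R : rat) *: 'X_[m]) /\
    pi_p p (((val q@_m)%:R : rat) *: 'X_[m]) = q@_m *: 'X_[m].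
  move=> m.
  have [z r] := Zp_int pr (val q@_m)%N; rewrite -pmulrn in z r.
  have [z2 e2] := ZPmono m z; split => //; rewrite e2 r.
  congr (_ *: _); rewrite -pmulrn; exact: natr_Zp.
have [z e] := ZP_sum pr (msupp q) (P := xpredT) (fun m _ => (H m).1).
split; first exact: z.
rewrite /liftp e; under eq_bigr do rewrite (H _).2.
by rewrite -mpolyE.
Qed.
End Main1.

Section Aux.
Variables (n p : nat).
Hypothesis pr : prime p.

Lemma red_nonzero (r : rat) : Zp p (p%:R * r) -> ~ Zp p r ->
  red_rat p (p%:R * r) != 0.
Proof.
move=> zs nzr; apply/negP => /eqP r0; apply: nzr.
move: zs r0; set s := p%:R * r => zs r0.
have d0 : (denq s)%:~R != 0 :> 'F_p by rewrite (Fp_int0 pr).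
have : ((numq s)%:~R : 'F_p) == 0.
  by move: r0; rewrite /red_rat => /eqP; rewrite mulf_eq0 invr_eq0 (negbTE d0) orbF.
rewrite (Fp_int0 pr) => pn.
have pz : ((p:int) %| numq s)%Z by [].
apply: (@Zp_frac p r (numq s %/ p)%Z (denq s)) => //.
have E := rat_den s.
have E2 := divzK pz.
have p0 : (p%:R : rat) != 0 by rewrite pnatr_eq0 -lt0n prime_gt0.
apply: (mulIf p0).
have H : ((numq s %/ p)%Z)%:~R * p%:R = (numq s)%:~R :> rat.
  by rewrite -{2}E2 rmorphM /= -pmulrn.
rewrite H -E /s; ring.
Qed.

Definition ZPb (f : {mpoly rat[n]}) := all (fun m => Zp p f@_m) (msupp f).

Lemma ZPbP f : reflect (ZP p f) (ZPb f).
Proof.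
apply: (iffP allP) => [H m|H m _]; last exact: H.
case: (boolP (m \in msupp f)) => mf; first exact: H.
rewrite (memN_msupp_eq0 mf); exact: Zp0 pr.
Qed.

Lemma den_poly_gt0 (f : {mpoly rat[n]}) : (0 < den_poly f)%N.
Proof.
rewrite /den_poly; apply: (big_ind (fun x => 0 < x)%N) => //.
  by move=> x y hx hy; rewrite lcmn_gt0 hx hy.
by move=> m _; rewrite absz_gt0 denq_neq0.
Qed.

Lemma ZP_powK (g : {mpoly rat[n]}) :
  exists K, ZP p ((p%:R ^+ K : rat) *: g).
Proof.
have [D' cop DE] := pfactor_coprime pr (den_poly_gt0 g).
set K := logn p (den_poly g) in DE.
exists K => m; rewrite mcoeffZ.
case: (boolP (m \in msupp g)) => mg; last first.
  rewrite (memN_msupp_eq0 mg) mulr0; exact: Zp0 pr.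
have dv : (`|denq g@_m| %| den_poly g)%N.
  exact: (big_lcm_dvd (fun m => `|denq g@_m|%N) mg).
set q := g@_m in dv *.
pose e := (den_poly g %/ `|denq q|)%N.
have De : den_poly g = (`|denq q| * e)%N by rewrite mulnC divnK.
have cop' : ~~ (p %| `|(D' : int)|)%N.
  by rewrite absz_nat -prime_coprime // .
apply: (@Zp_frac p _ (numq q * e) D' cop').
have E := rat_den q.
have hd : ((`|denq q|%N)%:R : rat) = (denq q)%:~R.
  by rewrite natr_absz gtr0_norm ?denq_gt0.
have H1 : ((den_poly g)%:R : rat) = (D'%:R) * p%:R ^+ K.
  by rewrite {1}DE natrM natrX.
have H2 : ((den_poly g)%:R : rat) = (denq q)%:~R * e%:R.
  by rewrite De natrM hd.
rewrite rmorphM /= -E -!pmulrn.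
have H4 : q * (denq q)%:~R * e%:R = q * ((D'%:R) * p%:R ^+ K).
  by rewrite -mulrA -H2 -H1.
rewrite H4; clearbody K; clear; ring.
Qed.

End Aux.

Section MinGen.
Variables (R : nzRingType) (n : nat) (le : rel 'X_{1..n}) (J : {mpoly R[n]} -> Prop).

Lemma exists_min_gen m : LT_of le J m -> exists m', min_gen le J m' /\ tdvd m' m.
Proof.
move: {2}(mdeg m) (erefl (mdeg m)) => d; elim/ltn_ind: d m => d IH m md Sm.
case: (classic (forall m', LT_of le J m' -> tdvd m' m -> m' = m)) => H.
  by exists m; split => //; exact: lepm_refl.
move/not_all_ex_not: H => [m' H'].
have [Sm' H''] := imply_to_and _ _ H'.
have [dv ne] := imply_to_and _ _ H''.
have lt : (mdeg m' < d)%N.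
  rewrite -md -(submK dv) mdegD -{1}[mdeg m']add0n ltn_add2r lt0n mdeg_eq0.
  apply/negP => /eqP e; apply: ne; by rewrite -(submK dv) e add0m.
have [m'' [mg dv2]] := IH _ lt m' erefl Sm'.
exists m''; split => //; exact: lepm_trans dv2 dv.
Qed.

Lemma min_genS m : min_gen le J m -> LT_of le J m.
Proof. by case. Qed.
End MinGen.

Section Main2.
Variables (n p : nat).
Hypothesis pr : prime p.
Variables (sigma : rel 'X_{1..n}) (I : {mpoly rat[n]} -> Prop)
  (Gs : seq {mpoly rat[n]}).
Hypotheses (hs : term_ordering sigma) (hI : is_ideal I)
  (GBs : reduced_GB sigma I Gs) (gs : ~~ (p %| den_seq Gs)%N).

Local Notation Ip := (I_p p Gs).

Lemma Ip_ideal : is_ideal Ip.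
Proof. exact: ideal_gen_ideal. Qed.

Lemma I_step (f g : {mpoly rat[n]}) (h : {mpoly rat[n]}) :
  I f -> I g -> I (f - h * g).
Proof.
case: hI => I0 Iadd Imul Jf Jg; rewrite -mulNr; apply: Iadd => //; exact: Imul.
Qed.

Lemma piS (f : {mpoly rat[n]}) : I f -> ZP p f -> Ip (pi_p p f).
Proof.
have [Ip0 Ipadd Ipmul] := Ip_ideal.
case: (eqVneq f 0) => [-> _ _|nz]; first by rewrite pi0.
suff H : forall t f, I f -> ZP p f -> f != 0 -> LT sigma f = t -> Ip (pi_p p f).
  by move=> If zf; exact: H _ f If zf nz erefl.
move=> t0; elim/(tlt_ind hs): t0 => t IH {}f If zf {}nz Lt.
have [GBu GBI GBd GBm GBr] := GBs.
have [g gG dv] := GBd f If nz.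
have [gnz lcg] := GBm g gG.
have zg := good_ZP pr gs gG.
have zc : Zp p (LC sigma f) := zf _.
have [zX eX] := ZPmono pr (LT sigma f - LT sigma g)%MM zc.
have [zXg eXg] := ZPM pr zX zg.
have [zf2 ef2] := ZPB pr zf zXg.
have If2 := I_step (LC sigma f *: 'X_[LT sigma f - LT sigma g]) If (GBI g gG).
have Ipg := ideal_gen_mem (pi_p p (LC sigma f *: 'X_[LT sigma f - LT sigma g]))
   (map_f (pi_p p) gG).
have fE : f = (f - LC sigma f *: 'X_[LT sigma f - LT sigma g] * g)
   + LC sigma f *: 'X_[LT sigma f - LT sigma g] * g by rewrite subrK.
have epi : pi_p p f = pi_p p (f - LC sigma f *: 'X_[LT sigma f - LT sigma g] * g)
   + pi_p p (LC sigma f *: 'X_[LT sigma f - LT sigma g]) * pi_p p g.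
  by rewrite -eXg -(ZPD pr zf2 zXg).2 -fE.
rewrite epi; apply: Ipadd => //.
move: (red_step hs nz gnz lcg dv) zf2 If2.
set f2 := (f - _); case: (eqVneq f2 0) => [-> _ _ _|nz2]; first by rewrite pi0.
case=> [e0|lt]; first by move: nz2; rewrite e0 eqxx.
move=> zf2 If2; apply: (IH (LT sigma f2)) => //.
by rewrite -Lt.
Qed.

Lemma lift (f' : {mpoly 'F_p[n]}) : Ip f' ->
  exists f, [/\ I f, ZP p f & pi_p p f = f'].
Proof.
case=> h ->.
have [I0 Iadd Imul] := hI.
have sz : size (map (pi_p p) Gs) = size Gs by rewrite size_map.
have mG (i : 'I_(size (map (pi_p p) Gs))) : Gs`_i \in Gs.
  by apply: mem_nth; rewrite -sz.
exists (\sum_(i < size (map (pi_p p) Gs)) liftp (h i) * Gs`_i); split.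
- have [_ GBI _ _ _] := GBs.
  apply: (big_ind (fun x => I x)) => // i _; apply: Imul; exact: GBI _ (mG i).
- have H (i : 'I_(size (map (pi_p p) Gs))) :=
    ZPM pr (liftpP pr (h i)).1 (good_ZP pr gs (mG i)).
  exact: (ZP_sum pr _ (fun i _ => (H i).1)).1.
- have H (i : 'I_(size (map (pi_p p) Gs))) :=
    ZPM pr (liftpP pr (h i)).1 (good_ZP pr gs (mG i)).
  rewrite (ZP_sum pr _ (fun i _ => (H i).1)).2; apply: eq_bigr => i _.
  rewrite (H i).2 (liftpP pr (h i)).2; congr (_ * _).
  by rewrite (nth_map 0) // -sz.
Qed.

Variables (tau : rel 'X_{1..n}) (Gt : seq {mpoly rat[n]}).
Hypotheses (ht : term_ordering tau) (GBt : reduced_GB tau I Gt).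

Lemma piLT (f : {mpoly rat[n]}) : ZP p f -> red_rat p (LC tau f) != 0 ->
  pi_p p f != 0 /\ LT tau (pi_p p f) = LT tau f.
Proof.
move=> zf h.
have sub m : m \in msupp (pi_p p f) -> m \in msupp f.
  rewrite !mcoeff_msupp mcoeff_pi; apply: contra_neq => ->; exact: red0.
have mem : LT tau f \in msupp (pi_p p f) by rewrite mcoeff_msupp mcoeff_pi.
split; first by apply/negP => /eqP e; move: mem; rewrite e msupp0.
apply: (LT_eq ht mem) => m' hm. have := sub _ hm. move=> hh. exact: (LT_ge ht hh).
Qed.

Lemma Sp_of_good g : g \in Gt -> ZP p g -> LT_of tau Ip (LT tau g).
Proof.
move=> gG zg.
have [_ GBI _ GBm _] := GBt.
have [gnz lcg] := GBm g gG.
have r1 : red_rat p (LC tau g) != 0 by rewrite lcg (Zp1 pr).2 oner_neq0.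
have [nz e] := piLT zg r1.
exists (pi_p p g); split => //; exact: piS (GBI g gG) zg.
Qed.

Lemma partA : (forall g, g \in Gt -> ZP p g) ->
  forall m, LT_of tau I m <-> LT_of tau Ip m.
Proof.
move=> allg m; have [GBu GBI GBd GBm GBr] := GBt; split.
  case=> f [If nz Lt].
  have [g gG dv] := GBd f If nz.
  have := LT_of_up ht (LT tau f - LT tau g)%MM Ip_ideal (Sp_of_good gG (allg g gG)).
  by rewrite submK // Lt.
case=> f' [Ipf nz' Lt']; rewrite -Lt'.
have [f [If zf ef]] := lift Ipf.
suff H : forall t f, I f -> ZP p f -> pi_p p f = f' -> LT tau f = t ->
    LT_of tau I (LT tau f') by exact: H _ f If zf ef erefl.
move=> t0; elim/(tlt_ind ht): t0 => t IH {}f {}If {}zf {}ef Lt.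
have nz : f != 0.
  by apply/negP => /eqP f0; move: nz'; rewrite -ef f0 pi0 eqxx.
case: (eqVneq (red_rat p (LC tau f)) 0) => [r0|rn]; last first.
  exists f; split => //; rewrite -ef; symmetry; exact: (piLT zf rn).2.
have [g gG dv] := GBd f If nz.
have [gnz lcg] := GBm g gG.
have zg := allg g gG.
have zc : Zp p (LC tau f) := zf _.
have [zX eX] := ZPmono pr (LT tau f - LT tau g)%MM zc.
have [zXg eXg] := ZPM pr zX zg.
have [zf2 ef2] := ZPB pr zf zXg.
have If2 := I_step (LC tau f *: 'X_[LT tau f - LT tau g]) If (GBI g gG).
have e2 : pi_p p (f - LC tau f *: 'X_[LT tau f - LT tau g] * g) = f'.
  by rewrite ef2 eXg eX r0 scale0r mul0r subr0.
move: (red_step ht nz gnz lcg dv) zf2 If2 e2.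
set f2 := (f - _); case: (eqVneq f2 0) => [-> _ _ _|nz2].
  by rewrite pi0 => f0; move: nz'; rewrite -f0 eqxx.
case=> [e0|lt]; first by move: nz2; rewrite e0 eqxx.
move=> zf2 If2 e2.
have lt' : tlt tau (LT tau f2) t by rewrite -Lt.
exact: (IH (LT tau f2) lt' f2 If2 zf2 e2 erefl).
Qed.


Lemma F2 g : g \in Gt -> ~ ZP p g ->
  exists u, [/\ LT_of tau Ip u, u \in msupp g & tlt tau u (LT tau g)].
Proof.
move=> gG bad.
have [_ GBI _ GBm _] := GBt.
have [gnz lcg] := GBm g gG.
have [I0 Iadd Imul] := hI.
have exK : exists k, ZPb p ((p%:R ^+ k : rat) *: g).
  have [K hK] := ZP_powK pr g; exists K; exact/(ZPbP pr).
case: (ex_minnP exK) => k /(ZPbP pr) zh kmin.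
have k0 : k != 0%N.
  apply/negP => /eqP k0; apply: bad; move: zh; rewrite k0 expr0 scale1r => H.
  exact: H.
have [k' kE] : exists k', k = k'.+1 by case: (k) k0 => [|k'] //; exists k'.
have nzk' : ~ ZP p ((p%:R ^+ k' : rat) *: g).
  move/(ZPbP pr) => H; have := kmin _ H; rewrite kE ltnn.
  done.
have [m0 hm0] : exists m0, ~ Zp p ((p%:R ^+ k' : rat) *: g)@_m0.
  by apply: not_all_ex_not.
set h := (p%:R ^+ k : rat) *: g.
have hE m : h@_m = p%:R * ((p%:R ^+ k' : rat) *: g)@_m.
  by rewrite /h !mcoeffZ kE exprS mulrA.
have rn : red_rat p h@_m0 != 0.
  rewrite hE; apply: red_nonzero => //; rewrite -hE; exact: zh.
have Ih : I h by rewrite /h -mul_mpolyC; exact: Imul (GBI g gG).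
have Iph : Ip (pi_p p h) := piS Ih zh.
have pinz : pi_p p h != 0.
  apply/negP => /eqP e; move: rn; rewrite -mcoeff_pi e mcoeff0 eqxx.
  done.
exists (LT tau (pi_p p h)); split.
- by exists (pi_p p h); split.
- have := LT_mem ht pinz; rewrite !mcoeff_msupp mcoeff_pi /h mcoeffZ.
  by apply: contra_neq => ->; rewrite mulr0 red0.
- have mem := LT_mem ht pinz.
  have memg : LT tau (pi_p p h) \in msupp g.
    move: mem; rewrite !mcoeff_msupp mcoeff_pi /h mcoeffZ.
    by apply: contra_neq => ->; rewrite mulr0 red0.
  apply/andP; split; first exact: (LT_ge ht memg).
  apply/negP => /eqP e; move: mem; rewrite e mcoeff_msupp mcoeff_pi /h mcoeffZ.
  move: lcg; rewrite /LC => ->; rewrite mulr1 (ZPpow pr k).2 natrX pchar_Fp_0 //.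
  by rewrite expr0n (negbTE k0) eqxx.
Qed.


Lemma SI_LT g : g \in Gt -> LT_of tau I (LT tau g).
Proof.
move=> gG; have [_ GBI _ GBm _] := GBt; have [gnz _] := GBm g gG.
by exists g; split => //; exact: GBI.
Qed.

Lemma GB_dvd m : LT_of tau I m -> exists2 g, g \in Gt & tdvd (LT tau g) m.
Proof.
case=> f [If nz <-]; have [_ _ GBd _ _] := GBt; exact: GBd.
Qed.

Lemma not_SI g u : g \in Gt -> u \in msupp g -> tlt tau u (LT tau g) ->
  ~ LT_of tau I u.
Proof.
move=> gG ug lt /GB_dvd [g' g'G dv].
have [_ _ _ _ GBr] := GBt.
case: (eqVneq g' g) => [e|ne].
  by move: (tltNle ht lt); rewrite -e (tdvd_le ht dv).
by move: (GBr g g' gG g'G ne u ug); rewrite dv.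
Qed.

Lemma MI_LT t : min_gen tau I t -> exists2 g, g \in Gt & LT tau g = t.
Proof.
case=> St Hmin; have [g gG dv] := GB_dvd St.
by exists g => //; apply: Hmin => //; exact: SI_LT.
Qed.

Lemma LT_MI g : g \in Gt -> min_gen tau I (LT tau g).
Proof.
move=> gG; split; first exact: SI_LT.
move=> m' Sm' dv; have [g' g'G dv'] := GB_dvd Sm'.
have [_ _ _ GBm GBr] := GBt; have [gnz _] := GBm g gG.
case: (eqVneq g' g) => [e|ne].
  by apply: (tdvd_anti ht dv); rewrite -e.
have := GBr g g' gG g'G ne (LT tau g) (LT_mem ht gnz).
by rewrite (tdvd_trans dv' dv).
Qed.

Lemma min_bad : (exists2 g, g \in Gt & ~ ZP p g) ->
  exists g, [/\ g \in Gt, ~ ZP p g &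
    forall g', g' \in Gt -> ~ ZP p g' -> tau (LT tau g) (LT tau g')].
Proof.
move=> [g0 g0G b0].
suff H : forall t g, g \in Gt -> ~ ZP p g -> LT tau g = t -> exists g, [/\ g \in Gt, ~ ZP p g &
    forall g', g' \in Gt -> ~ ZP p g' -> tau (LT tau g) (LT tau g')].
  exact: H _ g0 g0G b0 erefl.
move=> t0; elim/(tlt_ind ht): t0 => t IH g gG bg Lt.
case: (classic (forall g', g' \in Gt -> ~ ZP p g' -> tau (LT tau g) (LT tau g'))) => H.
  by exists g.
move/not_all_ex_not: H => [g' H'].
have [g'G H''] := imply_to_and _ _ H'.
have [bg' nle] := imply_to_and _ _ H''.
have lt : tlt tau (LT tau g') t.
  rewrite -Lt; apply: (Nle_tlt ht); apply/negP => h; exact: nle h.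
exact: (IH _ lt g' g'G bg' erefl).
Qed.


Lemma K1 gs0 : gs0 \in Gt -> ~ ZP p gs0 ->
  exists v, [/\ min_gen tau Ip v, ~ min_gen tau I v & tlt tau v (LT tau gs0)].
Proof.
move=> gG bad.
have [u [Spu ug ltu]] := F2 gG bad.
have nSu := not_SI gG ug ltu.
have [v [Mpv dvv]] := exists_min_gen Spu.
exists v; split => //.
  move=> [Sv _]; apply: nSu.
  have := LT_of_up ht (u - v)%MM hI Sv; rewrite submK //.
exact: (le_tlt_trans ht (tdvd_le ht dvv) ltu).
Qed.

Lemma K2 gs0 : gs0 \in Gt -> ~ ZP p gs0 ->
  (forall g', g' \in Gt -> ~ ZP p g' -> tau (LT tau gs0) (LT tau g')) ->
  forall t, min_gen tau I t -> ~ min_gen tau Ip t ->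
  exists v, [/\ min_gen tau Ip v, ~ min_gen tau I v & tlt tau v t].
Proof.
move=> gG bad gmin t MIt nMpt.
case: (boolP (tlt tau t (LT tau gs0))) => lt; last first.
  have [v [h1 h2 h3]] := K1 gG bad.
  exists v; split => //; apply: (tlt_le_trans ht h3).
  case: (boolP (tau (LT tau gs0) t)) => // nle.
  by move: lt; rewrite (Nle_tlt ht nle).
have [g g'G Lg] := MI_LT MIt.
have zg : ZP p g.
  apply: NNPP => bg; have := gmin g g'G bg; rewrite Lg => h.
  by move: (tltNle ht lt); rewrite h.
have Spt : LT_of tau Ip t by rewrite -Lg; exact: Sp_of_good g'G zg.
have [w Hw] : exists w, ~ (LT_of tau Ip w -> tdvd w t -> w = t).
  apply: not_all_ex_not => H; apply: nMpt; split => //.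
have [Spw Hw'] := imply_to_and _ _ Hw.
have [dw nwt] := imply_to_and _ _ Hw'.
have [v [Mpv dvw]] := exists_min_gen Spw.
have dvt := tdvd_trans dvw dw.
have nvt : v != t.
  apply/negP => /eqP e; apply: nwt; apply: (tdvd_anti ht dw); by rewrite -e.
exists v; split => //.
  case=> Sv _; apply/negP: nvt; rewrite negbK; apply/eqP.
  by case: MIt => _ Hm; apply: Hm.
by apply/andP; split => //; exact: (tdvd_le ht dvt).
Qed.

End Main2.

Section Lists.
Variables (T : eqType) (r : rel T).
Hypotheses (irr : irreflexive r) (tr : transitive r)
  (tot : forall x y, x != y -> r x y || r y x).

Lemma sorted_head_lt x s y : sorted r (x :: s) -> y \in s -> r x y.
Proof.
move=> /= ps ys; have := order_path_min tr ps; move/allP; exact.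
Qed.

Lemma list_prec (x0 : T) (s t : seq T) : sorted r s -> sorted r t ->
  (exists v, [/\ v \in t, v \notin s & exists2 w, w \in s & r v w]) ->
  (forall x, x \in s -> x \notin t -> exists v, [/\ v \in t, v \notin s & r v x]) ->
  exists k, [/\ (k < minn (size s) (size t))%N, take k s = take k t
     & r (nth x0 t k) (nth x0 s k)].
Proof.
elim: s t => [|x s IH] [|y t] ss st H1 H2.
- by case: H1 => v [].
- by case: H1 => v [_ _ [w]].
- by case: H1 => v [].
case: (eqVneq x y) => [exy|nxy]; last first.
  exists 0%N; split; [by rewrite minnSS | by [] | rewrite /=].
  have := tot nxy; case/orP => // rxy.
  have xnt : x \notin y :: t.
    rewrite inE negb_or nxy /=; apply/negP => xt.
    by have := tr (sorted_head_lt st xt) rxy; rewrite irr.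
  have [v [vt vs rvx]] := H2 x (mem_head _ _) xnt.
  move: vt; rewrite inE => /orP[/eqP vy|vt].
    by have := tr rvx rxy; rewrite vy irr.
  by have := tr (tr (sorted_head_lt st vt) rvx) rxy; rewrite irr.
move: exy st H1 H2 => <- st H1 H2.
have ss' : sorted r s by exact: path_sorted ss.
have st' : sorted r t by exact: path_sorted st.
have [k [hk tk nk]] : exists k, [/\ (k < minn (size s) (size t))%N, take k s = take k t
     & r (nth x0 t k) (nth x0 s k)].
  apply: IH => //.
    case: H1 => v [vt vs [w ws rvw]].
    have vx : v != x by apply/negP => /eqP e; move: vs; rewrite e mem_head.
    have vt' : v \in t by move: vt; rewrite inE (negbTE vx).
    exists v; split => //.
      by move: vs; rewrite inE negb_or => /andP[].
    exists w => //; move: ws; rewrite inE => /orP[/eqP wx|//].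
    by have := tr (sorted_head_lt st vt') rvw; rewrite wx irr.
  move=> x' x's x'nt.
  have x'x : x' != x.
    by apply/negP => /eqP e; have := sorted_head_lt ss x's; rewrite e irr.
  have x'nt' : x' \notin x :: t by rewrite inE negb_or x'x.
  have x'in : x' \in x :: s by rewrite inE x's orbT.
  have [v [vt vs rv]] := H2 x' x'in x'nt'.
  have vx : v != x by apply/negP => /eqP e; move: vs; rewrite e mem_head.
  exists v; split => //.
    by move: vt; rewrite inE (negbTE vx).
  by move: vs; rewrite inE negb_or => /andP[].
exists k.+1; split => //=.
- by rewrite minnSS ltnS.
- by rewrite tk.
Qed.
End Lists.

Local Close Scope ring_scope.


Theorem theorem4p13 (n : nat) (sigma tau : rel 'X_{1..n})
    (I : {mpoly rat[n]} -> Prop) (p : nat) (Gsigma Gtau : seq {mpoly rat[n]})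
    (OI : seq 'X_{1..n}) (Op : seq 'X_{1..n}) :
  term_ordering sigma -> term_ordering tau ->
  is_ideal I -> nonzero_ideal I -> prime p ->
  reduced_GB sigma I Gsigma -> ~~ (p %| den_seq Gsigma) ->
  reduced_GB tau I Gtau ->
  is_O tau I OI -> is_O tau (I_p p Gsigma) Op ->
  (~~ (p %| den_seq Gtau) -> Op = OI) /\
  (p %| den_seq Gtau -> prec_tau tau Op OI /\ ~ proper_prefix OI Op).
Proof.
move=> hs ht hI _ pr GBs gs GBt [sOI memOI] [sOp memOp].
have trt : transitive (tlt tau) by move=> y x z; exact: (tlt_trans ht).
have irt : irreflexive (tlt tau) by move=> x; apply/negbTE; exact: tlt_irr.
split.
  move=> gt.
  have allg g (gG : g \in Gtau) := good_ZP pr gt gG.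
  have eqS := partA pr hs hI GBs gs ht GBt allg.
  have eqM m : min_gen tau I m <-> min_gen tau (I_p p Gsigma) m.
    rewrite /min_gen; split.
      by case=> h1 h2; split; [exact/eqS | move=> m' /eqS; exact: h2].
    by case=> h1 h2; split; [exact/eqS | move=> m' /eqS; exact: h2].
  apply: (irr_sorted_eq trt irt sOp sOI) => x.
  apply/idP/idP => h.
    by apply/memOI/eqM/memOp.
  by apply/memOp/eqM/memOI.
move=> bt.
have [gs0 [gG bad gmin]] := min_bad ht (bad_exists pr bt).
have [v [Mpv nMIv ltv]] := K1 pr hs hI GBs gs ht GBt gG bad.
have [k [hk tk nk]] := list_prec irt trt (tlt_total ht) 0%MM sOI sOp
  (ex_intro _ v (And3 (proj2 (memOp v) Mpv) (introN idP (fun h => nMIv (proj1 (memOI v) h)))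
     (ex_intro2 _ _ (LT tau gs0) (proj2 (memOI _) (LT_MI ht GBt gG)) ltv)))
  (fun x xI xnp =>
     let: ex_intro v (And3 h1 h2 h3) :=
       K2 pr hs hI GBs gs ht GBt gG bad gmin (proj1 (memOI x) xI)
          (fun h => negP xnp (proj2 (memOp x) h)) in
     ex_intro _ v (And3 (proj2 (memOp v) h1) (introN idP (fun h => h2 (proj1 (memOI v) h))) h3)).
split.
  right; exists k; split => //.
move=> [hsz hpre].
have kI : (k < size OI)%N by apply: leq_trans hk (geq_minl _ _).
have e : nth 0%MM OI k = nth 0%MM Op k by rewrite {1}hpre nth_take.
by move: nk; rewrite e irt.
Qed.
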